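(* Let $\hslash\in\mathbb{R}$ and let $a\in A_\hslash^\infty$. Then the commutator \[\left[\begin{bmatrix}\pi_\hslash(a)&0\\0&\pi_\hslash(a)\end{bmatrix},\ D\right],\qquad D=\begin{bmatrix}0&x-\frac{d}{dx}\\ x+\frac{d}{dx}&0\end{bmatrix},\] defined on $\mathcal{S}(\mathbb{R})\oplus\mathcal{S}(\mathbb{R})$, extends to a bounded operator on $L^2(\mathbb{R})\oplus L^2(\mathbb{R})$.
   Context: $\mathbb{T}=\mathbb{R}/\mathbb{Z}$. For $\hslash\in\mathbb{R}$, $A_\hslash=C(\mathbb{T})\rtimes_\hslash\mathbb{Z}$ is the crossed product C*-algebra for the action of $\mathbb{Z}$ on $\mathbb{T}$ generated by translation by $\hslash$ mod $\mathbb{Z}$; it is generated by unitaries $U$ (the function $U(t)=e^{2\pi i t}$) and $V$ (the generator of $\mathbb{Z}$), with $UV=e^{-2\pi i\hslash}VU$. The Schwartz subalgebra is $A_\hslash^\infty=\{\sum_{n,m}a_{nm}U^nV^m:\ \sum|a_{nm}|(1+n^2+m^2)^k<\infty\ \forall k\}$. The representation $\pi_\hslash:A_\hslash\to\mathbb{B}(L^2(\mathbb{R}))$ lets $f\in C(\mathbb{T})$ act as multiplication by $f$ regarded as a $1$-periodic function on $\mathbb{R}$, and $V$ act by $(V\xi)(x)=\xi(x-\hslash)$. $\mathcal{S}(\mathbb{R})$ is the Schwartz space; $x$ denotes the multiplication operator by the coordinate. *)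

(* Defs.v *)
From HB Require Import structures.
From mathcomp Require Import all_boot all_order all_algebra.
From mathcomp Require Import all_classical all_reals all_analysis.
From mathcomp Require Import complex.
Set Implicit Arguments. Unset Strict Implicit. Unset Printing Implicit Defensive.
Import Order.TTheory GRing.Theory Num.Theory.
Import numFieldNormedType.Exports.
Local Open Scope classical_set_scope.
Local Open Scope ring_scope.
Local Open Scope complex_scope.

Section Defs.
Variable R : realType.

Definition smooth_real (f : R -> R) : Prop :=
  forall (n : nat) (x : R), derivable (derive1n n f) x 1.

Definition schwartz_real (f : R -> R) : Prop :=
  smooth_real f /\
  forall k l : nat, exists M : R, forall x : R, `| x ^+ k * derive1n l f x | <= M.

Definition schwartz (xi : R -> R[i]) : Prop :=
  schwartz_real (fun x => complex.Re (xi x)) /\ schwartz_real (fun x => complex.Im (xi x)).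

Definition cderiv (xi : R -> R[i]) : R -> R[i] :=
  fun x => (derive1 (fun y => complex.Re (xi y)) x) +i* (derive1 (fun y => complex.Im (xi y)) x).

Definition cmulx (xi : R -> R[i]) : R -> R[i] := fun x => x%:C * xi x.

Definition opMinus (xi : R -> R[i]) : R -> R[i] := fun x => cmulx xi x - cderiv xi x.
Definition opPlus (xi : R -> R[i]) : R -> R[i] := fun x => cmulx xi x + cderiv xi x.

Definition climn (u : nat -> R[i]) : R[i] :=
  (limn (fun N => complex.Re (u N))) +i* (limn (fun N => complex.Im (u N))).

Definition expi (t : R) : R[i] := (cos t) +i* (sin t).

Definition zsq (N : nat) (F : int -> int -> R[i]) : R[i] :=
  \sum_(i < (2 * N).+1) \sum_(j < (2 * N).+1) F (i%:Z - N%:Z) (j%:Z - N%:Z).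

Definition cabs (z : R[i]) : R :=
  Num.sqrt (complex.Re z ^+ 2 + complex.Im z ^+ 2).

(* Schwartz (rapidly decreasing) coefficient sequences: a = sum a_nm U^n V^m
   lies in A_hbar^infty *)
Definition rapid_coeff (a : int -> int -> R[i]) : Prop :=
  forall k : nat,
    (\esum_(p in [set: int * int])
       ((cabs (a p.1 p.2)) * (1 + (p.1)%:~R ^+ 2 + (p.2)%:~R ^+ 2) ^+ k)%:E
     < +oo)%E.

(* pi_hbar(a) xi, for a = sum a_nm U^n V^m:
   (pi(a) xi)(x) = sum_{n,m} a_nm e^{2 pi i n x} xi(x - m hbar)
   (U acts by multiplication by e^{2 pi i x}, V by translation by hbar) *)
Definition piA (h : R) (a : int -> int -> R[i]) (xi : R -> R[i]) : R -> R[i] :=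
  fun x => climn (fun N => zsq N (fun n m =>
     a n m * expi (2 * pi * n%:~R * x) * xi (x - m%:~R * h))).

Definition L2sq (f : R -> R[i]) : \bar R :=
  (\int[lebesgue_measure]_(x in [set: R]) ((complex.Re (f x)) ^+ 2 + (complex.Im (f x)) ^+ 2)%:E)%E.

End Defs.

(* Main.v *)
Require Import Defs.
From HB Require Import structures.
From mathcomp Require Import all_boot all_order all_algebra.
From mathcomp Require Import all_classical all_reals all_analysis.
From mathcomp Require Import measurable_realfun.
From mathcomp Require Import complex.
From mathcomp Require Import ring lra zify.
Import Order.TTheory GRing.Theory Num.Theory.
Import numFieldNormedType.Exports.
Local Open Scope classical_set_scope.
Local Open Scope ring_scope.
Local Open Scope complex_scope.
Set Implicit Arguments. Unset Strict Implicit. Unset Printing Implicit Defensive.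

Section PartA.
Variable R : realType.

Lemma cauchy_bound (u c : nat -> R) :
  (forall N M, (N <= M)%N -> `|u M - u N| <= c N) -> c @ \oo --> (0:R) ->
  cvgn u /\ forall N, `|limn u - u N| <= c N.
Proof.
move=> hu hc.
have cu : cvgn u.
  apply: cauchy_cvg; apply/cauchy_exP => e e0.
  have /cvgrPdist_lt /(_ e e0) [N _ HN] := hc.
  exists (u N); exists N => // n /= Nn.
  rewrite /ball /=. 
  rewrite distrC. apply: (le_lt_trans (hu _ _ Nn)).
  have := HN N (leqnn N); rewrite sub0r normrN.
  by apply: le_lt_trans; apply: ler_norm.
split => // N.
have h1 : (fun M => `|u M - u N|) @ \oo --> `|limn u - u N|.
  by apply: cvg_norm; apply: cvgB => //; apply: cvg_cst.
rewrite -(cvg_lim _ h1) //.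
apply: limr_le; first by apply/cvg_ex; eexists; exact: h1.
by exists N => // M /= NM; apply: hu.
Qed.


Lemma lip_derive (phi dphi : R -> R) (B : R) :
  (forall y : R, is_derive y 1 phi (dphi y)) -> (forall y, `|dphi y| <= B) ->
  forall a b, `|phi b - phi a| <= B * `|b - a|.
Proof.
move=> hd hB a b.
wlog ab : a b / a <= b.
  move=> H; case: (leP a b) => [/H//|/ltW /H].
  by rewrite distrC [`|a - b|]distrC.
have [c cab Hc] : exists2 c, c \in `[a, b] & phi b - phi a = dphi c * (b - a).
  apply: (MVT_segment ab).
  apply: derivable_within_continuous => x xab.
  by have [] := hd x.
rewrite Hc.
by rewrite normrM ler_wpM2r.
Qed.


Lemma deriv_lim (F DF : nat -> R -> R) (f g : R -> R) (e : nat -> R) :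
  (forall N (y : R), is_derive y 1 (F N) (DF N y)) ->
  (forall y, (fun N => F N y) @ \oo --> f y) ->
  (forall N y, `|g y - DF N y| <= e N) ->
  e @ \oo --> (0:R) ->
  forall x : R, is_derive x 1 f (g x).
Proof.
move=> hF hf hg he x.
have key : forall N a b, `|(f b - F N b) - (f a - F N a)| <= e N * `|b - a|.
  move=> N a b.
  have step : forall M, `|(F M b - F N b) - (F M a - F N a)| <= (e M + e N) * `|b - a|.
    move=> M.
    apply: (@lip_derive (fun y => F M y - F N y) (fun y => DF M y - DF N y)).
    move=> y; apply: (le_trans (ler_distD (g y) _ _)).
    by rewrite distrC lerD.
  have hL : (fun M => `|(F M b - F N b) - (F M a - F N a)|) @ \oo -->
             `|(f b - F N b) - (f a - F N a)|.
    apply: cvg_norm; apply: cvgB; apply: cvgB => //; exact: cvg_cst.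
  have hR : (fun M => (e M + e N) * `|b - a|) @ \oo --> (0 + e N) * `|b - a|.
    apply: cvgMl; apply: cvgD => //; exact: cvg_cst.
  rewrite -(cvg_lim _ hL) // -[e N]add0r -(cvg_lim _ hR) //.
  apply: ler_lim; [exact: cvgP hL|exact: cvgP hR|].
  by apply: nearW => M; apply: step.
have hQ : (fun h : R => h^-1 *: ((f \o shift x) (h *: 1) - f x)) @ 0^' --> g x.
  apply/cvgrPdist_le => eps eps0.
  have eps30 : 0 < eps / 3 by rewrite divr_gt0.
  have /cvgrPdist_le /(_ (eps/3) eps30) [N _ HN] := he.
  have eN : e N <= eps / 3.
    by apply: le_trans (HN N (leqnn N)); rewrite sub0r normrN ler_norm.
  have [dFN1 dFN2] := hF N x.
  have hN : (fun h : R => h^-1 *: ((F N \o shift x) (h *: 1) - F N x)) @ 0^' --> DF N x.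
    by rewrite -dFN2; exact: dFN1.
  have /cvgrPdist_le /(_ (eps/3) eps30) hN2 := hN.
  near=> h.
  have hn0 : h != 0 by near: h; exact: nbhs_dnbhs_neq.
  have hh : `|DF N x - h^-1 *: ((F N \o shift x) h%:A - F N x)| <= eps / 3.
    by near: h; exact: hN2.
  have e1 : `|g x - DF N x| <= eps / 3 := le_trans (hg N x) eN.
  have e3 : `|h^-1 *: ((F N \o shift x) h%:A - F N x) -
              h^-1 *: ((f \o shift x) h%:A - f x)| <= eps / 3.
    rewrite -scalerBr normrZ normfV /=.
    have := key N x (h%:A + x).
    rewrite addrK.
    have -> : F N (h%:A + x) - F N x - (f (h%:A + x) - f x) =
              - (f (h%:A + x) - F N (h%:A + x) - (f x - F N x)) by ring.
    rewrite normrN => kk.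
    apply: le_trans eN.
    rewrite ler_pdivrMl ?normr_gt0 //.
    by apply: (le_trans kk); rewrite mulrC normrZ normr1 mulr1.
  set QN := h^-1 *: ((F N \o shift x) h%:A - F N x) in hh e3 *.
  set Qf := h^-1 *: ((f \o shift x) h%:A - f x) in e3 *.
  have -> : g x - Qf = (g x - DF N x) + (DF N x - QN) + (QN - Qf) by ring.
  apply: (le_trans (ler_normD _ _)).
  apply: (le_trans (lerD (ler_normD _ _) (lexx _))).
  have : eps / 3 + eps / 3 + eps / 3 = eps by field.
  move=> <-; apply: lerD => //; exact: lerD.
apply: DeriveDef; first exact: cvgP hQ.
exact: cvg_lim hQ.
Unshelve. all: by end_near. Qed.

End PartA.

Section PartB.
Variable R : realType.

Definition zr (N : nat) : seq int := [seq (i%:Z - N%:Z) | i <- iota 0 (2 * N).+1].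
Definition sq (N : nat) : seq (int * int) := [seq (n, m) | n <- zr N, m <- zr N].

Lemma zsqE N (F : int -> int -> R[i]) : zsq N F = \sum_(p <- sq N) F p.1 p.2.
Proof.
rewrite /zsq /sq big_allpairs /zr big_map.
rewrite -(big_mkord xpredT (fun i => \sum_(j < (2 * N).+1) F (i%:Z - N%:Z) (j%:Z - N%:Z))).
rewrite /index_iota subn0; apply: eq_bigr => i _.
by rewrite big_map -(big_mkord xpredT (fun j => F (i%:Z - N%:Z) (j%:Z - N%:Z))) /index_iota subn0.
Qed.

Lemma mem_zr N n : (n \in zr N) = (`|n|%N <= N)%N.
Proof.
apply/mapP/idP.
  move=> [k]; rewrite mem_iota; move=> /andP [_ hk] ->. lia.
move=> hn; exists (absz (n + N%:Z)); last by lia.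
rewrite mem_iota; lia.
Qed.

Lemma uniq_zr N : uniq (zr N).
Proof.
rewrite map_inj_uniq ?iota_uniq // => i j; lia.
Qed.


Lemma mem_sq N p : (p \in sq N) = (`|p.1|%N <= N)%N && (`|p.2|%N <= N)%N.
Proof.
case: p => n m /=.
apply/allpairsP/andP.
  by move=> [[n' m'] /= [h1 h2 [-> ->]]]; rewrite -!mem_zr.
by move=> [h1 h2]; exists (n, m); rewrite /= !mem_zr.
Qed.

Lemma uniq_sq N : uniq (sq N).
Proof.
apply: allpairs_uniq; try exact: uniq_zr.
by move=> [a b] [c d] _ _ /= [-> ->].
Qed.

Lemma sq_split (V : zmodType) N M (G : int * int -> V) : (N <= M)%N ->
  \sum_(p <- sq M) G p = \sum_(p <- sq N) G p + \sum_(p <- sq M | p \notin sq N) G p.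
Proof.
move=> NM; rewrite (bigID (fun p => p \in sq N)) /=; congr (_ + _).
rewrite -big_filter; apply: perm_big; apply: uniq_perm.
- by apply: filter_uniq; exact: uniq_sq.
- exact: uniq_sq.
move=> p; rewrite mem_filter; apply/andP/idP => [[]//|h]; split => //.
move: h; rewrite !mem_sq => /andP [h1 h2]; apply/andP; split; lia.
Qed.

End PartB.

Section PartC.
Variable R : realType.
Notation C := R[i].

Definition ccvg (u : nat -> C) (z : C) :=
  (fun N => complex.Re (u N)) @ \oo --> complex.Re z /\
  (fun N => complex.Im (u N)) @ \oo --> complex.Im z.

Lemma ccvg_climn u z : ccvg u z -> climn u = z.
Proof.
case: z => r s [h1 h2]; rewrite /climn (cvg_lim _ h1) // (cvg_lim _ h2) //.
Qed.

Lemma cReD (x y : C) : complex.Re (x + y) = complex.Re x + complex.Re y.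
Proof. by case: x; case: y. Qed.
Lemma cImD (x y : C) : complex.Im (x + y) = complex.Im x + complex.Im y.
Proof. by case: x; case: y. Qed.
Lemma cReN (x : C) : complex.Re (- x) = - complex.Re x.
Proof. by case: x. Qed.
Lemma cImN (x : C) : complex.Im (- x) = - complex.Im x.
Proof. by case: x. Qed.
Lemma cReB (x y : C) : complex.Re (x - y) = complex.Re x - complex.Re y.
Proof. by rewrite cReD cReN. Qed.
Lemma cImB (x y : C) : complex.Im (x - y) = complex.Im x - complex.Im y.
Proof. by rewrite cImD cImN. Qed.
Lemma cReM (x y : C) : complex.Re (x * y) = complex.Re x * complex.Re y - complex.Im x * complex.Im y.
Proof. by case: x; case: y. Qed.
Lemma cImM (x y : C) : complex.Im (x * y) = complex.Re x * complex.Im y + complex.Im x * complex.Re y.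
Proof. by case: x => a b; case: y => c d /=; ring. Qed.
Lemma cReR (r : R) : complex.Re r%:C = r. Proof. by []. Qed.
Lemma cImR (r : R) : complex.Im r%:C = 0. Proof. by []. Qed.
Lemma cRe0 : complex.Re (0 : C) = 0. Proof. by []. Qed.
Lemma cIm0 : complex.Im (0 : C) = 0. Proof. by []. Qed.
Lemma cRe_sum (I : Type) (s : seq I) (P : pred I) (F : I -> C) :
  complex.Re (\sum_(i <- s | P i) F i) = \sum_(i <- s | P i) complex.Re (F i).
Proof. by apply: (big_morph _ cReD cRe0). Qed.
Lemma cIm_sum (I : Type) (s : seq I) (P : pred I) (F : I -> C) :
  complex.Im (\sum_(i <- s | P i) F i) = \sum_(i <- s | P i) complex.Im (F i).
Proof. by apply: (big_morph _ cImD cIm0). Qed.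

Lemma ccvgD u v x y : ccvg u x -> ccvg v y -> ccvg (fun N => u N + v N) (x + y).
Proof.
move=> [h1 h2] [h3 h4]; split.
  by under eq_fun do rewrite cReD; rewrite cReD; apply: cvgD.
by under eq_fun do rewrite cImD; rewrite cImD; apply: cvgD.
Qed.

Lemma ccvgN u x : ccvg u x -> ccvg (fun N => - u N) (- x).
Proof.
move=> [h1 h2]; split.
  by under eq_fun do rewrite cReN; rewrite cReN; apply: cvgN.
by under eq_fun do rewrite cImN; rewrite cImN; apply: cvgN.
Qed.

Lemma ccvgB u v x y : ccvg u x -> ccvg v y -> ccvg (fun N => u N - v N) (x - y).
Proof. by move=> h1 h2; apply: ccvgD => //; apply: ccvgN. Qed.

Lemma ccvgZ (c : R) u x : ccvg u x -> ccvg (fun N => c%:C * u N) (c%:C * x).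
Proof.
move=> [h1 h2]; split.
  under eq_fun do rewrite cReM cReR cImR mul0r subr0.
  by rewrite cReM cReR cImR mul0r subr0; apply: cvgMr.
under eq_fun do rewrite cImM cReR cImR mul0r addr0.
by rewrite cImM cReR cImR mul0r addr0; apply: cvgMr.
Qed.

Lemma ccvg_ext u v x : (forall N, u N = v N) -> ccvg u x -> ccvg v x.
Proof. by move=> e; have -> : v = u by apply/funext => N; rewrite e. Qed.

Definition nc (z : C) : R := Num.sqrt (complex.Re z ^+ 2 + complex.Im z ^+ 2).

Lemma ncE z : nc z = cabs z. Proof. by []. Qed.

Lemma nc_ge0 z : 0 <= nc z. Proof. exact: sqrtr_ge0. Qed.

Lemma nc_Re z : `|complex.Re z| <= nc z.
Proof.
rewrite /nc -(sqrtr_sqr (complex.Re z)) ler_sqrt ?addr_ge0 ?sqr_ge0 //.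
by rewrite lerDl sqr_ge0.
Qed.
Lemma nc_Im z : `|complex.Im z| <= nc z.
Proof.
rewrite /nc -(sqrtr_sqr (complex.Im z)) ler_sqrt ?addr_ge0 ?sqr_ge0 //.
by rewrite lerDr sqr_ge0.
Qed.

Lemma nc_normc z : nc z = Normc.normc z.
Proof. by case: z. Qed.

Lemma ncD x y : nc (x + y) <= nc x + nc y.
Proof. rewrite !nc_normc; exact: le_normcD. Qed.

Lemma ncM x y : nc (x * y) = nc x * nc y.
Proof. rewrite !nc_normc; exact: Normc.normcM. Qed.

Lemma nc_sum (I : Type) (s : seq I) (P : pred I) (F : I -> C) :
  nc (\sum_(i <- s | P i) F i) <= \sum_(i <- s | P i) nc (F i).
Proof.
elim/big_rec2: _ => [|i y1 y2 _ IH]; first by rewrite /nc /= expr0n /= addr0 sqrtr0.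
by apply: (le_trans (ncD _ _)); apply: lerD.
Qed.

Lemma nc_sqr z : nc z ^+ 2 = complex.Re z ^+ 2 + complex.Im z ^+ 2.
Proof. by rewrite /nc sqr_sqrtr // addr_ge0 // sqr_ge0. Qed.

Lemma nc_R r : nc r%:C = `|r|.
Proof. by rewrite /nc /= expr0n /= addr0 sqrtr_sqr. Qed.

Lemma nc_expi t : nc (expi t) = 1.
Proof. by rewrite /nc /expi /= cos2Dsin2 sqrtr1. Qed.

End PartC.

Section PartD.
Variable R : realType.
Notation C := R[i].
Variable a : int -> int -> C.
Hypothesis ha : rapid_coeff a.

Definition w (p : int * int) : R :=
  cabs (a p.1 p.2) * (1 + (p.1)%:~R ^+ 2 + (p.2)%:~R ^+ 2) ^+ 1.

Lemma w_ge0 p : 0 <= w p.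
Proof.
rewrite /w expr1; apply: mulr_ge0; first exact: sqrtr_ge0.
by rewrite !addr_ge0 // sqr_ge0.
Qed.

Definition T N := \sum_(p <- sq N) w p.
Definition W := fine (\esum_(p in [set: int * int]) (w p)%:E)%E.

Lemma T_le_W N : T N <= W.
Proof.
have h := ha 1%N.
have ge0 : (0 <= \esum_(p in [set: int * int]) (w p)%:E)%E.
  by apply: esum_ge0 => p _; rewrite lee_fin w_ge0.
have fin : (\esum_(p in [set: int * int]) (w p)%:E)%E \is a fin_num.
  by rewrite ge0_fin_numE.
rewrite -lee_fin /W fineK // /T -sumEFin (fsbig_seq _ _ (uniq_sq N)).
apply: esum_ge; exists [set` sq N] => //; split => //; exact: finite_seq.
Qed.

Lemma T_nd : {homo T : n m / (n <= m)%N >-> n <= m}.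
Proof.
move=> n m nm; rewrite /T (sq_split _ nm) lerDl.
by apply: sumr_ge0 => p _; exact: w_ge0.
Qed.

Lemma T_cvg : cvgn T.
Proof.
apply: nondecreasing_is_cvgn; first exact: T_nd.
by exists W => _ [N _ <-]; exact: T_le_W.
Qed.

Definition L := limn T.
Definition e N := L - T N.

Lemma e_ge0 N : 0 <= e N.
Proof. by rewrite subr_ge0; apply: nondecreasing_cvgn_le; [exact: T_nd|exact: T_cvg]. Qed.

Lemma e_cvg : e @ \oo --> (0 : R).
Proof.
rewrite -(subrr L); apply: cvgB; first exact: cvg_cst.
exact: T_cvg.
Qed.

Lemma tail N M : (N <= M)%N -> \sum_(p <- sq M | p \notin sq N) w p <= e N.
Proof.
move=> NM; have := sq_split w NM; rewrite -/(T M) -/(T N) => hM.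
have -> : \sum_(p <- sq M | p \notin sq N) w p = T M - T N by rewrite hM addrC addKr.
rewrite /e lerB //; apply: nondecreasing_cvgn_le; [exact: T_nd|exact: T_cvg].
Qed.

Lemma summ (G : int * int -> C) (B : R) : 0 <= B -> (forall p, nc (G p) <= B * w p) ->
  ccvg (fun N => \sum_(p <- sq N) G p) (climn (fun N => \sum_(p <- sq N) G p)) /\
  forall N, `|complex.Re (climn (fun N => \sum_(p <- sq N) G p)) - complex.Re (\sum_(p <- sq N) G p)| <= B * e N /\
            `|complex.Im (climn (fun N => \sum_(p <- sq N) G p)) - complex.Im (\sum_(p <- sq N) G p)| <= B * e N.
Proof.
move=> B0 hG.
set S := fun N => \sum_(p <- sq N) G p.
have hd : forall N M, (N <= M)%N -> nc (S M - S N) <= B * e N.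
  move=> N M NM; rewrite /S (sq_split G NM) addrC addKr.
  apply: (le_trans (nc_sum _ _ _)).
  apply: (@le_trans _ _ (\sum_(p <- sq M | p \notin sq N) B * w p)).
    by apply: ler_sum => p _; exact: hG.
  by rewrite -mulr_sumr ler_wpM2l // tail.
have hc : (fun N => B * e N) @ \oo --> (0 : R).
  by rewrite -(mulr0 B); apply: cvgMr; exact: e_cvg.
have [cRe bRe] : cvgn (fun N => complex.Re (S N)) /\
     forall N, `|limn (fun N => complex.Re (S N)) - complex.Re (S N)| <= B * e N.
  apply: cauchy_bound => // N M NM; rewrite -cReB.
  exact: le_trans (nc_Re _) (hd _ _ NM).
have [cIm bIm] : cvgn (fun N => complex.Im (S N)) /\
     forall N, `|limn (fun N => complex.Im (S N)) - complex.Im (S N)| <= B * e N.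
  apply: cauchy_bound => // N M NM; rewrite -cImB.
  exact: le_trans (nc_Im _) (hd _ _ NM).
split; first by split; rewrite /climn /=; [exact: cRe|exact: cIm].
by move=> N; split; [exact: bRe|exact: bIm].
Qed.

End PartD.

Section PartE.
Variable R : realType.
Notation C := R[i].

Definition cder (f : R -> C) (x : R) (df : C) :=
  is_derive x 1 (fun y => complex.Re (f y)) (complex.Re df) /\
  is_derive x 1 (fun y => complex.Im (f y)) (complex.Im df).

Lemma cder_eq f x df : cder f x df -> cderiv f x = df.
Proof.
move=> [h1 h2]; rewrite /cderiv !derive1E.
by rewrite (@derive_val _ _ _ _ _ _ _ h1) (@derive_val _ _ _ _ _ _ _ h2); case: df {h1 h2}.
Qed.

Lemma cder_mul f g x df dg : cder f x df -> cder g x dg ->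
  cder (fun y => f y * g y) x (df * g x + f x * dg).
Proof.
move=> [h1 h2] [h3 h4]; split.
  have -> : (fun y => complex.Re (f y * g y)) =
    (fun y => complex.Re (f y) * complex.Re (g y) - complex.Im (f y) * complex.Im (g y)).
    by apply/funext => y; rewrite cReM.
  apply: is_derive_eq.
  by rewrite cReD !cReM /GRing.scale /=; ring.
have -> : (fun y => complex.Im (f y * g y)) =
  (fun y => complex.Re (f y) * complex.Im (g y) + complex.Im (f y) * complex.Re (g y)).
  by apply/funext => y; rewrite cImM.
apply: is_derive_eq.
by rewrite cImD !cImM /GRing.scale /=; ring.
Qed.


Lemma cder_cst (c : C) x : cder (fun _ => c) x 0.
Proof. by split; apply: is_derive_eq. Qed.

Lemma cder_add f g x df dg : cder f x df -> cder g x dg ->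
  cder (fun y => f y + g y) x (df + dg).
Proof.
move=> [h1 h2] [h3 h4]; split.
  have -> : (fun y => complex.Re (f y + g y)) = (fun y => complex.Re (f y) + complex.Re (g y)).
    by apply/funext => y; rewrite cReD.
  by apply: is_derive_eq; rewrite cReD.
have -> : (fun y => complex.Im (f y + g y)) = (fun y => complex.Im (f y) + complex.Im (g y)).
  by apply/funext => y; rewrite cImD.
by apply: is_derive_eq; rewrite cImD.
Qed.

Lemma cder_sum (I : Type) (s : seq I) (F : I -> R -> C) (dF : I -> C) x :
  (forall i, cder (F i) x (dF i)) ->
  cder (fun y => \sum_(i <- s) F i y) x (\sum_(i <- s) dF i).
Proof.
move=> h; elim: s => [|i s IH].
  have -> : (fun y => \sum_(i <- [::]) F i y) = (fun _ => 0) by apply/funext => y; rewrite big_nil.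
  by rewrite big_nil; exact: cder_cst.
have -> : (fun y => \sum_(j <- i :: s) F j y) = (fun y => F i y + \sum_(j <- s) F j y).
  by apply/funext => y; rewrite big_cons.
by rewrite big_cons; apply: cder_add.
Qed.

Lemma cder_expi (k : R) x :
  cder (fun y => expi (k * y)) x ((k%:C * 'i) * expi (k * x)).
Proof.
have hk : is_derive x 1 (fun y : R => k * y) k.
  by apply: is_derive_eq; rewrite /GRing.scale /=; ring.
split.
  have := is_derive1_comp (is_derive_cos (k * x)) hk.
  by move=> H; apply: is_derive_eq; rewrite /expi /=; ring.
have := is_derive1_comp (is_derive_sin (k * x)) hk.
by move=> H; apply: is_derive_eq; rewrite /expi /=; ring.
Qed.


Lemma cder_shift (f df : R -> C) (c x : R) : (forall y, cder f y (df y)) ->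
  cder (fun y => f (y - c)) x (df (x - c)).
Proof.
move=> h.
have hs : is_derive x 1 (fun y : R => y - c) 1.
  by apply: is_derive_eq; rewrite /GRing.scale /=; ring.
have [h1 h2] := h (x - c); split.
  have := @is_derive1_comp _ (fun y => complex.Re (f y)) (fun y => y - c) x _ _ h1 hs.
  by move=> H; apply: is_derive_eq; rewrite mulr1.
have := @is_derive1_comp _ (fun y => complex.Im (f y)) (fun y => y - c) x _ _ h2 hs.
by move=> H; apply: is_derive_eq; rewrite mulr1.
Qed.

Lemma schwartz_cder (f : R -> C) : schwartz f -> forall y, cder f y (cderiv f y).
Proof.
move=> [[sr _] [si _]] y; split.
  by have := sr 0%N y; rewrite derive1n0 => /derivableP; rewrite -derive1E.
by have := si 0%N y; rewrite derive1n0 => /derivableP; rewrite -derive1E.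
Qed.

Lemma nc_le_ReIm (z : C) : nc z <= `|complex.Re z| + `|complex.Im z|.
Proof.
have h0 : 0 <= `|complex.Re z| + `|complex.Im z| by rewrite addr_ge0.
rewrite /nc -(ger0_norm h0) -sqrtr_sqr ler_sqrt ?sqr_ge0 //.
rewrite sqrrD !real_normK ?num_real // -addrA [X in _ <= _ + X]addrC addrA lerDl.
by rewrite mulrn_wge0 // mulr_ge0.
Qed.

Lemma schwartz_bound (f : R -> C) : schwartz f ->
  exists B, 0 <= B /\ forall y, nc (f y) <= B /\ nc (cderiv f y) <= B.
Proof.
move=> [[_ sr] [_ si]].
have [M1 h1] := sr 0%N 0%N.
have [M2 h2] := sr 0%N 1%N.
have [M3 h3] := si 0%N 0%N.
have [M4 h4] := si 0%N 1%N.
move: h1 h2 h3 h4; rewrite derive1n0 derive1n1 => h1 h2 h3 h4.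
have g1 : forall y, `|complex.Re (f y)| <= M1 by move=> y; have := h1 y; rewrite expr0 mul1r.
have g2 : forall y, `|complex.Re (cderiv f y)| <= M2 by move=> y; have := h2 y; rewrite expr0 mul1r.
have g3 : forall y, `|complex.Im (f y)| <= M3 by move=> y; have := h3 y; rewrite expr0 mul1r.
have g4 : forall y, `|complex.Im (cderiv f y)| <= M4 by move=> y; have := h4 y; rewrite expr0 mul1r.
have p1 : 0 <= M1 by apply: le_trans (g1 0).
have p2 : 0 <= M2 by apply: le_trans (g2 0).
have p3 : 0 <= M3 by apply: le_trans (g3 0).
have p4 : 0 <= M4 by apply: le_trans (g4 0).
exists (M1 + M2 + M3 + M4); split; first by rewrite !addr_ge0.
move=> y; split; apply: (le_trans (nc_le_ReIm _)).
  have := lerD (g1 y) (g3 y); move/le_trans; apply; lra.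
have := lerD (g2 y) (g4 y); move/le_trans; apply; lra.
Qed.

Lemma cder_cont f : (forall y, exists df, cder f y df) ->
  continuous (fun y => complex.Re (f y)) /\ continuous (fun y => complex.Im (f y)).
Proof.
move=> h; split => y; have [df [h1 h2]] := h y.
  by apply: differentiable_continuous; apply/derivable1_diffP; case: h1.
by apply: differentiable_continuous; apply/derivable1_diffP; case: h2.
Qed.

End PartE.

Section PartF0.
Variable R : realType.
Notation C := R[i].

Lemma abs_le_sq (r s : R) : `|r| <= 1 + r ^+ 2 + s ^+ 2.
Proof. rewrite ler_norml; apply/andP; split; nra. Qed.

Lemma one_le_sq (r s : R) : 1 <= 1 + r ^+ 2 + s ^+ 2.
Proof. nra. Qed.

Variable a : int -> int -> C.

Lemma nc_a_le p : nc (a p.1 p.2) <= w a p.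
Proof.
rewrite /w expr1 -ncE -[X in X <= _]mulr1 ler_wpM2l ?nc_ge0 //; exact: one_le_sq.
Qed.

Lemma nc_a_n p : nc (a p.1 p.2) * `|(p.1)%:~R : R| <= w a p.
Proof.
rewrite /w expr1 -ncE ler_wpM2l ?nc_ge0 //; exact: abs_le_sq.
Qed.

Lemma nc_a_m p : nc (a p.1 p.2) * `|(p.2)%:~R : R| <= w a p.
Proof.
rewrite /w expr1 -ncE ler_wpM2l ?nc_ge0 //.
by rewrite -addrA [X in _ <= _ + X]addrC addrA; exact: abs_le_sq.
Qed.

Lemma nc_i : nc ('i : C) = 1.
Proof. by rewrite /nc /= expr0n expr1n add0r sqrtr1. Qed.

End PartF0.


Section PartF.
Variable R : realType.
Notation C := R[i].
Variables (h : R) (a : int -> int -> C).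
Hypothesis ha : rapid_coeff a.
Variable xi : R -> C.
Hypothesis hxi : schwartz xi.
Variable B : R.
Hypothesis B0 : 0 <= B.
Hypothesis hB : forall y, nc (xi y) <= B /\ nc (cderiv xi y) <= B.

Definition kap (p : int * int) : R := 2 * pi * (p.1)%:~R.
Definition shf (p : int * int) : R := (p.2)%:~R * h.

Lemma piAE f x : piA h a f x =
  climn (fun N => \sum_(p <- sq N) a p.1 p.2 * expi (kap p * x) * f (x - shf p)).
Proof. by rewrite /piA; congr climn; apply/funext => N; rewrite zsqE. Qed.

Lemma nc_term (f : R -> C) p y (Bf : R) : 0 <= Bf -> nc (f (y - shf p)) <= Bf ->
  nc (a p.1 p.2 * expi (kap p * y) * f (y - shf p)) <= Bf * w a p.
Proof.
move=> Bf0 hf; rewrite !ncM nc_expi mulr1 mulrC.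
by apply: ler_pM => //; [exact: nc_ge0|exact: nc_ge0|exact: nc_a_le].
Qed.

Lemma conv_piA (f : R -> C) (Bf : R) : 0 <= Bf -> (forall y, nc (f y) <= Bf) ->
  forall x, ccvg (fun N => \sum_(p <- sq N) a p.1 p.2 * expi (kap p * x) * f (x - shf p))
                 (piA h a f x).
Proof.
move=> Bf0 hf x; rewrite piAE.
have H : forall p, nc (a p.1 p.2 * expi (kap p * x) * f (x - shf p)) <= Bf * w a p.
  by move=> p; apply: nc_term.
by case: (summ ha Bf0 H).
Qed.

Definition dt p y := (0 * expi (kap p * y) + a p.1 p.2 * ((kap p)%:C * 'i * expi (kap p * y)))
   * xi (y - shf p) + a p.1 p.2 * expi (kap p * y) * cderiv xi (y - shf p).

Lemma cder_t p y : cder (fun z => a p.1 p.2 * expi (kap p * z) * xi (z - shf p)) y (dt p y).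
Proof.
apply: cder_mul.
  apply: cder_mul; first exact: cder_cst.
  exact: cder_expi.
apply: cder_shift; exact: schwartz_cder.
Qed.

Lemma nc_kap p : `|kap p| = 2 * pi * `|(p.1)%:~R : R|.
Proof. by rewrite /kap !normrM (ger0_norm (pi_ge0 R)) (ger0_norm (ler0n _ 2)). Qed.

Lemma nc_dt p y : nc (dt p y) <= ((2 * pi + 1) * B) * w a p.
Proof.
rewrite /dt mul0r add0r.
apply: (le_trans (ncD _ _)).
have [hb1 _] := hB (y - shf p).
have [_ hb2] := hB (y - shf p).
have hpi : 0 <= pi :> R by exact: pi_ge0.
have e1 : nc (a p.1 p.2 * ((kap p)%:C * 'i * expi (kap p * y)) * xi (y - shf p))
          <= 2 * pi * B * w a p.
  rewrite !ncM nc_R nc_i nc_expi !mulr1 nc_kap.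
  have := nc_a_n a p; have := nc_ge0 (a p.1 p.2); have := nc_ge0 (xi (y - shf p)).
  have := normr_ge0 ((p.1)%:~R : R); have := w_ge0 a p.
  move=> H1 H2 H3 H4 H5.
  have -> : nc (a p.1 p.2) * (2 * pi * `|p.1%:~R|) * nc (xi (y - shf p)) =
            (2 * pi) * ((nc (a p.1 p.2) * `|p.1%:~R|) * nc (xi (y - shf p))) by ring.
  rewrite (_ : 2 * pi * B * w a p = (2 * pi) * (w a p * B)); last by ring.
  rewrite ler_wpM2l ?mulr_ge0 //.
  by apply: ler_pM => //; rewrite mulr_ge0.
have e2 := nc_term B0 hb2 (p := p) (y := y).
rewrite mulrDl mulrDl mul1r; exact: lerD.
Qed.

Lemma cder_piA x : cder (piA h a xi) x (climn (fun N => \sum_(p <- sq N) dt p x)).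
Proof.
have Bd0 : 0 <= (2 * pi + 1) * B by rewrite mulr_ge0 // addr_ge0 // mulr_ge0 // pi_ge0.
have hcv := conv_piA B0 (fun y => (hB y).1).
have he : (fun N => (2 * pi + 1) * B * e a N) @ \oo --> (0 : R).
  by rewrite -(mulr0 ((2 * pi + 1) * B)); apply: cvgMr; exact: e_cvg ha.
split.
  apply: (deriv_lim (F := fun N y => complex.Re (\sum_(p <- sq N) a p.1 p.2 * expi (kap p * y) * xi (y - shf p)))
                    (DF := fun N y => complex.Re (\sum_(p <- sq N) dt p y))
                    (f := fun y => complex.Re (piA h a xi y))
                    (g := fun y => complex.Re (climn (fun N => \sum_(p <- sq N) dt p y)))).
  - move=> N y; have [h1 _] := cder_sum (sq N) (fun p => cder_t p y); exact: h1.
  - by move=> y; have [h1 _] := hcv y.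
  - move=> N y; have [_ hb] := summ ha Bd0 (G := fun p => dt p y) (fun p => nc_dt p y).
    exact: (hb N).1.
  - exact: he.
apply: (deriv_lim (F := fun N y => complex.Im (\sum_(p <- sq N) a p.1 p.2 * expi (kap p * y) * xi (y - shf p)))
                  (DF := fun N y => complex.Im (\sum_(p <- sq N) dt p y))
                  (f := fun y => complex.Im (piA h a xi y))
                  (g := fun y => complex.Im (climn (fun N => \sum_(p <- sq N) dt p y)))).
- move=> N y; have [_ h1] := cder_sum (sq N) (fun p => cder_t p y); exact: h1.
- by move=> y; have [_ h1] := hcv y.
- move=> N y; have [_ hb] := summ ha Bd0 (G := fun p => dt p y) (fun p => nc_dt p y).
  exact: (hb N).2.
- exact: he.
Qed.


Definition opS (s : R) (f : R -> C) : R -> C := fun y => cmulx f y + s%:C * cderiv f y.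

Definition sterm (s : R) p y := a p.1 p.2 * expi (kap p * y) * xi (y - shf p) *
  ((- shf p)%:C - (s * kap p)%:C * 'i).

Lemma comm_eq (s : R) x :
  piA h a (opS s xi) x - opS s (piA h a xi) x =
  climn (fun N => \sum_(p <- sq N) sterm s p x).
Proof.
have Bx0 : 0 <= (`|x| + `|h| + `|s|) * B by rewrite mulr_ge0 // !addr_ge0.
have H1 : forall p, nc (a p.1 p.2 * expi (kap p * x) * opS s xi (x - shf p))
                    <= (`|x| + `|h| + `|s|) * B * w a p.
  move=> p; rewrite !ncM nc_expi mulr1 /opS /cmulx.
  have [hb1 hb2] := hB (x - shf p).
  have e1 : nc ((x - shf p)%:C * xi (x - shf p) + s%:C * cderiv xi (x - shf p))
            <= (`|x| + `|(p.2)%:~R : R| * `|h| + `|s|) * B.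
    apply: (le_trans (ncD _ _)); rewrite !ncM !nc_R.
    have : `|x - shf p| <= `|x| + `|(p.2)%:~R : R| * `|h|.
      by rewrite /shf -normrM; apply: ler_normB.
    move=> hx.
    rewrite mulrDl; apply: lerD.
      apply: ler_pM => //; exact: nc_ge0.
    apply: ler_pM => //; exact: nc_ge0.
  have := nc_a_le a p; have := nc_a_m a p.
  move=> m1 m2.
  apply: (le_trans (ler_wpM2l (nc_ge0 _) e1)).
  have hh := normr_ge0 h; have hs := normr_ge0 s; have hxx := normr_ge0 x.
  have hm := normr_ge0 ((p.2)%:~R : R); have hn := nc_ge0 (a p.1 p.2).
  set na := nc (a p.1 p.2) in m1 m2 hn *; set nm := `|(p.2)%:~R : R| in m1 hm *.
  have -> : na * ((`|x| + nm * `|h| + `|s|) * B) =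
    (na * B) * `|x| + (na * nm) * (`|h| * B) + (na * B) * `|s| by ring.
  have -> : (`|x| + `|h| + `|s|) * B * w a p =
    (w a p * B) * `|x| + w a p * (`|h| * B) + (w a p * B) * `|s| by ring.
  have hab : na * B <= w a p * B by rewrite ler_wpM2r.
  rewrite lerD ?lerD // ?ler_wpM2r // ?mulr_ge0 //.
have c1 : ccvg (fun N => \sum_(p <- sq N) a p.1 p.2 * expi (kap p * x) * opS s xi (x - shf p))
               (piA h a (opS s xi) x).
  by rewrite piAE; case: (summ ha Bx0 H1).
have c2 := conv_piA B0 (fun y => (hB y).1) x.
have c3 : ccvg (fun N => \sum_(p <- sq N) dt p x) (cderiv (piA h a xi) x).
  rewrite (cder_eq (cder_piA x)).
  have Bd0 : 0 <= (2 * pi + 1) * B by rewrite mulr_ge0 // addr_ge0 // mulr_ge0 // pi_ge0.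
  by case: (summ ha Bd0 (fun p => nc_dt p x)).
have c := ccvgB c1 (ccvgD (ccvgZ x c2) (ccvgZ s c3)).
rewrite /opS /cmulx; symmetry; apply: ccvg_climn.
apply: ccvg_ext c => N.
rewrite !mulr_sumr -big_split -sumrB /=; apply: eq_bigr => p _.
rewrite /sterm /dt /opS /cmulx rmorphB rmorphN rmorphM /=.
ring.
Qed.

End PartF.

Section PartG1.
Variable R : realType.

Lemma int_shift (G : R -> R) (c : R) : continuous G -> (forall x, 0 <= G x) ->
  (\int[lebesgue_measure]_(x in [set: R]) (G (x - c))%:E =
   \int[lebesgue_measure]_(x in [set: R]) (G x)%:E)%E.
Proof.
move=> cG G0.
have hd : forall x : R, is_derive x 1 (fun y : R => y - c) 1.
  by move=> x; apply: is_derive_eq; rewrite /GRing.scale /=; ring.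
have dF : (fun y : R => y - c)^`()%classic = cst 1.
  by apply/funext => x; rewrite derive1E; exact: derive_val.
rewrite (@increasing_ge0_integration_by_substitutionT _ (fun y => y - c) G) //.
- by rewrite dF; apply: eq_integral => x xT /=; rewrite mulr1.
- by move=> x y xy; rewrite ltrD2r.
- by rewrite dF; exact: cst_continuous.
- by rewrite dF; exact: is_cvg_cst.
- by rewrite dF; exact: is_cvg_cst.
- exact: cvg_addrr_Ny.
- exact: cvg_addrr.
Qed.


Lemma cs_step (A P Q v : R) : 0 <= P -> 0 <= Q -> A ^+ 2 <= P * Q -> 2 * v * A <= Q + P * v ^+ 2.
Proof.
move=> P0 Q0 hA.
have [PP|Pp] := eqVneq P 0.
  rewrite PP mul0r in hA; rewrite PP.
  have hA2 := hA; have A0 : A = 0 by apply/eqP; rewrite -sqrf_eq0 eq_le hA2 sqr_ge0.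
  by rewrite A0 mulr0 mul0r addr0.
have Pgt : 0 < P by rewrite lt_def Pp P0.
rewrite -(ler_pM2l Pgt).
have : 0 <= (P * v - A) ^+ 2 by exact: sqr_ge0.
nra.
Qed.

Lemma CS (I : Type) (s : seq I) (c v : I -> R) : (forall i, 0 <= c i) ->
  (\sum_(i <- s) c i * v i) ^+ 2 <= (\sum_(i <- s) c i) * (\sum_(i <- s) c i * v i ^+ 2).
Proof.
move=> c0; elim: s => [|i s IH]; first by rewrite !big_nil expr0n /= mul0r.
rewrite !big_cons.
set A := \sum_(j <- s) c j * v j in IH *.
set P := \sum_(j <- s) c j in IH *.
set Q := \sum_(j <- s) c j * v j ^+ 2 in IH *.
have P0 : 0 <= P by apply: sumr_ge0.
have Q0 : 0 <= Q by apply: sumr_ge0 => j _; rewrite mulr_ge0 // sqr_ge0.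
have := cs_step (v i) P0 Q0 IH.
have := c0 i.
nra.
Qed.

End PartG1.

Section PartG2.
Variable R : realType.
Notation C := R[i].

Definition m2 (z : C) : R := complex.Re z ^+ 2 + complex.Im z ^+ 2.

Lemma m2_ge0 z : 0 <= m2 z.
Proof. by rewrite /m2 addr_ge0 // sqr_ge0. Qed.

Lemma cont_m2 (f : R -> C) : continuous (fun y => complex.Re (f y)) ->
  continuous (fun y => complex.Im (f y)) -> continuous (fun y => m2 (f y)).
Proof.
move=> h1 h2 y.
have -> : (fun y => m2 (f y)) = (fun y => complex.Re (f y)) \* (fun y => complex.Re (f y))
   + (fun y => complex.Im (f y)) \* (fun y => complex.Im (f y)).
  by apply/funext => z; rewrite /m2 /= !expr2.
apply: continuousD.
  by apply: continuousM; apply: h1.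
by apply: continuousM; apply: h2.
Qed.

Variables (h : R) (a : int -> int -> C).
Hypothesis ha : rapid_coeff a.
Variables (xi : R -> C) (B : R).
Hypothesis B0 : 0 <= B.
Hypothesis hB : forall y, nc (xi y) <= B.
Variables (sf : int * int -> R -> C) (K : R).
Hypothesis K0 : 0 <= K.
Hypothesis hs : forall p y, nc (sf p y) <= K * w a p * nc (xi (y - shf h p)).

Let C0 := K * W a.

Lemma W_ge0 : 0 <= W a.
Proof. apply: le_trans (T_le_W ha 0); apply: sumr_ge0 => p _; exact: w_ge0. Qed.

Lemma C0_ge0 : 0 <= C0.
Proof. by rewrite mulr_ge0 // W_ge0. Qed.

Definition Gn N y := C0 * \sum_(p <- sq N) (K * w a p) * m2 (xi (y - shf h p)).

Lemma sumKw N : \sum_(p <- sq N) K * w a p <= C0.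
Proof. by rewrite -mulr_sumr ler_wpM2l //; exact: (T_le_W ha N). Qed.

Lemma Gn_ge0 N y : 0 <= Gn N y.
Proof.
rewrite /Gn mulr_ge0 ?C0_ge0 //; apply: sumr_ge0 => p _.
by apply: mulr_ge0; [apply: mulr_ge0 => //; exact: w_ge0 | exact: m2_ge0].
Qed.

Lemma Gn_nd y : {homo (fun N => Gn N y) : n m / (n <= m)%N >-> n <= m}.
Proof.
move=> n m nm; rewrite /Gn ler_wpM2l ?C0_ge0 // (sq_split _ nm) lerDl.
by apply: sumr_ge0 => p _; apply: mulr_ge0; [apply: mulr_ge0 => //; exact: w_ge0 | exact: m2_ge0].
Qed.

Lemma m2_le_Gn N y : m2 (\sum_(p <- sq N) sf p y) <= Gn N y.
Proof.
set c := fun p => K * w a p.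
set v := fun p => nc (xi (y - shf h p)).
have c0 : forall p, 0 <= c p by move=> p; apply: mulr_ge0 => //; exact: w_ge0.
have h1 : nc (\sum_(p <- sq N) sf p y) <= \sum_(p <- sq N) c p * v p.
  apply: (le_trans (nc_sum _ _ _)); apply: ler_sum => p _; exact: hs.
have h2 : m2 (\sum_(p <- sq N) sf p y) <= (\sum_(p <- sq N) c p * v p) ^+ 2.
  rewrite /m2 -nc_sqr !expr2; apply: ler_pM => //; exact: nc_ge0.
apply: (le_trans h2); apply: (le_trans (CS (sq N) v c0)).
rewrite /Gn; apply: ler_pM.
- by apply: sumr_ge0.
- by apply: sumr_ge0 => p _; rewrite mulr_ge0 ?sqr_ge0.
- exact: sumKw.
apply: ler_sum => p _; rewrite /v nc_sqr.
by [].
Qed.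


Lemma cont_sum (I : Type) (s : seq I) (F : I -> R -> R) :
  (forall i, continuous (F i)) -> continuous (fun y => \sum_(i <- s) F i y).
Proof.
move=> hF; elim: s => [|i s IH].
  have -> : (fun y => \sum_(i <- [::]) F i y) = cst 0 by apply/funext => y; rewrite big_nil.
  exact: cst_continuous.
have -> : (fun y => \sum_(j <- i :: s) F j y) = F i + (fun y => \sum_(j <- s) F j y).
  by apply/funext => y; rewrite big_cons.
by move=> y; apply: continuousD; [exact: hF | exact: IH].
Qed.

Lemma cont_scale (k : R) (f : R -> R) : continuous f -> continuous (fun y => k * f y).
Proof.
move=> hf y.
have -> : (fun y => k * f y) = cst k \* f by [].
by apply: continuousM; [exact: cst_continuous | exact: hf].
Qed.

Hypothesis hxd : forall y, cder xi y (cderiv xi y).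
Hypothesis hcont : forall N,
  continuous (fun y => complex.Re (\sum_(p <- sq N) sf p y)) /\
  continuous (fun y => complex.Im (\sum_(p <- sq N) sf p y)).

Lemma cont_xi_shift (c : R) : continuous (fun y => m2 (xi (y - c))).
Proof.
have [h1 h2] := @cder_cont _ (fun y => xi (y - c)) (fun y => ex_intro _ _ (cder_shift c y hxd)).
exact: cont_m2.
Qed.

Definition Sg y := climn (fun N => \sum_(p <- sq N) sf p y).

Lemma S_ccvg y : ccvg (fun N => \sum_(p <- sq N) sf p y) (Sg y).
Proof.
have KB0 : 0 <= K * B by rewrite mulr_ge0.
have H : forall p, nc (sf p y) <= (K * B) * w a p.
  move=> p; apply: (le_trans (hs p y)).
  rewrite (_ : K * B * w a p = (K * w a p) * B); last by ring.
  by rewrite ler_wpM2l // mulr_ge0 // w_ge0.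
by case: (summ ha KB0 H).
Qed.

Lemma m2_cvg y : (fun N => m2 (\sum_(p <- sq N) sf p y)) @ \oo --> m2 (Sg y).
Proof.
have [c1 c2] := S_ccvg y.
rewrite /m2; under eq_fun do rewrite !expr2.
by rewrite !expr2; apply: cvgD; apply: cvgM.
Qed.

Definition Ginf y := limn (fun N => (Gn N y)%:E).

Lemma Gn_ndE y : {homo (fun N => (Gn N y)%:E) : n m / (n <= m)%N >-> (n <= m)%E}.
Proof. by move=> n m nm; rewrite lee_fin Gn_nd. Qed.

Lemma Gn_le_Ginf N y : ((Gn N y)%:E <= Ginf y)%E.
Proof.
rewrite /Ginf (cvg_lim _ (ereal_nondecreasing_cvgn (Gn_ndE y))) //.
by apply: ereal_sup_ubound; exists N.
Qed.

Lemma m2S_le y : ((m2 (Sg y))%:E <= Ginf y)%E.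
Proof.
have hc : (fun N => (m2 (\sum_(p <- sq N) sf p y))%:E) @ \oo --> (m2 (Sg y))%:E.
  by apply: cvg_EFin; [exact: nearW | exact: m2_cvg].
rewrite -(cvg_lim _ hc) //; apply: lime_le; first exact: cvgP hc.
apply: nearW => N; apply: le_trans (Gn_le_Ginf N y); rewrite lee_fin; exact: m2_le_Gn.
Qed.


Lemma meas_m2S : measurable_fun [set: R] (fun y => (m2 (Sg y))%:E).
Proof.
apply/measurable_EFinP.
apply: (measurable_fun_cvg (h := fun N y => m2 (\sum_(p <- sq N) sf p y))).
  move=> N; apply: continuous_measurable_fun.
  by have [c1 c2] := hcont N; exact: cont_m2.
by move=> y _; exact: m2_cvg.
Qed.

Lemma cont_Gn N : continuous (Gn N).
Proof.
apply: cont_scale; apply: cont_sum => p.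
by apply: cont_scale; exact: cont_xi_shift.
Qed.

Lemma meas_Gn N : measurable_fun [set: R] (fun y => (Gn N y)%:E).
Proof. by apply/measurable_EFinP; apply: continuous_measurable_fun; exact: cont_Gn. Qed.

Lemma meas_Ginf : measurable_fun [set: R] (Ginf : R -> \bar R).
Proof.
apply: (emeasurable_fun_cvg (fun N y => (Gn N y)%:E)); first exact: meas_Gn.
by move=> y _; exact: (ereal_nondecreasing_is_cvgn (Gn_ndE y)).
Qed.


Lemma L2sq_ge0 (f : R -> C) : (0 <= L2sq f)%E.
Proof. by apply: integral_ge0 => y _; rewrite lee_fin addr_ge0 // sqr_ge0. Qed.

Lemma int_term (k : R) (c : R) : 0 <= k ->
  (\int[lebesgue_measure]_(y in [set: R]) (k * m2 (xi (y - c)))%:E = k%:E * L2sq xi)%E.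
Proof.
move=> k0.
transitivity (\int[lebesgue_measure]_(y in [set: R]) (k%:E * (m2 (xi (y - c)))%:E))%E.
  by apply: eq_integral => y _; rewrite EFinM.
rewrite ge0_integralZl //.
- congr (_ * _)%E; rewrite /L2sq.
  apply: (int_shift (G := fun y => m2 (xi y))); last by move=> y; exact: m2_ge0.
  have [h1 h2] := @cder_cont _ xi (fun y => ex_intro _ _ (hxd y)).
  exact: cont_m2.
- apply/measurable_EFinP; apply: continuous_measurable_fun; exact: cont_xi_shift.
- by move=> y _; rewrite lee_fin m2_ge0.
Qed.


Lemma int_Gn N :
  (\int[lebesgue_measure]_(y in [set: R]) (Gn N y)%:E <= (C0 * C0)%:E * L2sq xi)%E.
Proof.
have kp : forall p, 0 <= C0 * (K * w a p).
  by move=> p; rewrite mulr_ge0 ?C0_ge0 //; apply: mulr_ge0 => //; exact: w_ge0.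
have -> : (\int[lebesgue_measure]_(y in [set: R]) (Gn N y)%:E = \int[lebesgue_measure]_(y in [set: R])
   (\sum_(p <- sq N) ((C0 * (K * w a p)) * m2 (xi (y - shf h p)))%:E))%E.
  apply: eq_integral => y _; rewrite sumEFin /Gn mulr_sumr.
  by congr (_%:E); apply: eq_bigr => p _; rewrite mulrA.
rewrite ge0_integral_sum //; first last.
- by move=> p y _; rewrite lee_fin mulr_ge0 // m2_ge0.
- move=> p; apply/measurable_EFinP; apply: continuous_measurable_fun.
  by apply: cont_scale; exact: cont_xi_shift.
under eq_bigr do rewrite int_term //.
rewrite -ge0_sume_distrl; last by move=> p _; rewrite lee_fin.
rewrite sumEFin; apply: lee_wpmul2r; first exact: L2sq_ge0.
rewrite lee_fin -mulr_sumr ler_wpM2l ?C0_ge0 //; exact: sumKw.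
Qed.


Lemma L2_bound : (L2sq Sg <= (C0 * C0)%:E * L2sq xi)%E.
Proof.
apply: (@le_trans _ _ (\int[lebesgue_measure]_(y in [set: R]) Ginf y)%E).
  apply: ge0_le_integral => //.
  - by move=> y _; rewrite lee_fin addr_ge0 // sqr_ge0.
  - exact: meas_m2S.
  - exact: meas_Ginf.
  - by move=> y _; exact: m2S_le.
have -> : (\int[lebesgue_measure]_(y in [set: R]) Ginf y =
   limn (fun N => \int[lebesgue_measure]_(y in [set: R]) (Gn N y)%:E))%E.
  rewrite /Ginf.
  have := @monotone_convergence _ _ _ lebesgue_measure [set: R] measurableT
     (fun N y => (Gn N y)%:E) meas_Gn (fun N y _ => Gn_ge0 N y) (fun y _ => Gn_ndE y).
  by [].
apply: lime_le.
  apply: ereal_nondecreasing_is_cvgn => n m nm.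
  apply: ge0_le_integral => //.
  + by move=> y _; rewrite lee_fin Gn_ge0.
  + exact: meas_Gn.
  + exact: meas_Gn.
  + by move=> y _; rewrite lee_fin Gn_nd.
by apply: nearW => N; exact: int_Gn.
Qed.

End PartG2.

Section PartI.
Variable R : realType.
Notation C := R[i].
Variables (h : R) (a : int -> int -> C).
Hypothesis ha : rapid_coeff a.

Let K : R := `|h| + 2 * pi.

Lemma K_ge0 : 0 <= K.
Proof. by rewrite /K addr_ge0 // mulr_ge0 // pi_ge0. Qed.

Lemma nc_sterm (xi : R -> C) (s : R) : `|s| = 1 -> forall p y,
  nc (sterm h a xi s p y) <= K * w a p * nc (xi (y - shf h p)).
Proof.
move=> s1 p y; rewrite /sterm !ncM nc_expi mulr1.
have e1 : nc ((- shf h p)%:C - (s * kap R p)%:C * 'i) <= `|(p.2)%:~R : R| * `|h| + 2 * pi * `|(p.1)%:~R : R|.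
  apply: (le_trans (nc_le_ReIm _)).
  rewrite /= !mulr0 !mul0r !subr0 !mulr1 !addr0 !sub0r !normrN !normrM s1 mul1r.
  by rewrite (ger0_norm (pi_ge0 R)) normr_nat.
have e2 : nc (a p.1 p.2) * nc ((- shf h p)%:C - (s * kap R p)%:C * 'i) <= K * w a p.
  apply: (le_trans (ler_wpM2l (nc_ge0 _) e1)).
  have m1 := nc_a_m a p; have m2 := nc_a_n a p.
  have -> : K * w a p = `|h| * w a p + 2 * pi * w a p by rewrite /K; ring.
  rewrite mulrDr; apply: lerD.
    rewrite mulrA [`|h| * _]mulrC; apply: ler_wpM2r => //.
  rewrite (_ : nc (a p.1 p.2) * (2 * pi * `|p.1%:~R|) = 2 * pi * (nc (a p.1 p.2) * `|p.1%:~R|)); last by ring.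
  by rewrite ler_wpM2l // mulr_ge0 // pi_ge0.
rewrite mulrAC; apply: ler_wpM2r => //; exact: nc_ge0.
Qed.


Lemma comm_bound (xi : R -> C) (s : R) : schwartz xi -> `|s| = 1 ->
  (L2sq (fun x => (piA h a (opS s xi) x - opS s (piA h a xi) x)%R)
   <= ((K * W a) * (K * W a))%:E * L2sq xi)%E.
Proof.
move=> hxi s1; have [B [B0 hB]] := schwartz_bound hxi.
have -> : (fun x => piA h a (opS s xi) x - opS s (piA h a xi) x) = Sg (sterm h a xi s).
  by apply/funext => x; rewrite (comm_eq h ha hxi B0 hB).
apply: (L2_bound ha B0 (fun y => (hB y).1) K_ge0 (nc_sterm xi s1)).
  exact: schwartz_cder hxi.
move=> N; apply: cder_cont => y; eexists; apply: cder_sum => p.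
apply: cder_mul; last exact: cder_cst.
exact: (cder_t h a hxi p y).
Qed.

End PartI.

Unset Implicit Arguments.

Theorem mainTheorem1 (R : realType) (h : R) (a : int -> int -> R[i]) :
  rapid_coeff a ->
  exists C : R, forall xi1 xi2 : R -> R[i], schwartz xi1 -> schwartz xi2 ->
    (L2sq (fun x => ((piA h a (opMinus xi2) x - opMinus (piA h a xi2) x)%R))
     + L2sq (fun x => ((piA h a (opPlus xi1) x - opPlus (piA h a xi1) x)%R))
     <= C%:E * (L2sq xi1 + L2sq xi2))%E.
Proof.
move=> ha.
set c := ((`|h| + 2 * pi) * W a * ((`|h| + 2 * pi) * W a)).
exists c => xi1 xi2 h1 h2.
have opME : forall f : R -> R[i], opMinus f = opS (-1) f.
  by move=> f; apply/funext => y; rewrite /opMinus /opS rmorphN1 mulN1r.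
have opPE : forall f : R -> R[i], opPlus f = opS 1 f.
  by move=> f; apply/funext => y; rewrite /opPlus /opS rmorph1 mul1r.
rewrite !opME !opPE.
have b1 := comm_bound h ha h2 (normrN1 R).
have b2 := comm_bound h ha h1 (normr1 R).
apply: le_trans (leeD b1 b2) _.
by rewrite (ge0_muleDr _ (L2sq_ge0 xi1) (L2sq_ge0 xi2)) addeC.
Qed.
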